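(* Let $X$ and $Y$ be non-trivial Banach spaces, $r,s\in(0,1]$, and $\kappa$ a cardinal. If $X$ is $(r,s)$-$\mathrm{SQ}_{<\kappa}$, then $X\oplus_\infty Y$ is $(r,s)$-$\mathrm{SQ}_{<\kappa}$.
   Context: $X\oplus_\infty Y$ is $X\times Y$ with norm $\max\{\|x\|,\|y\|\}$. A Banach space $Z$ is $(r,s)$-$\mathrm{SQ}_{<\kappa}$ if for every set $A\subset S_Z$ with $|A|<\kappa$ there exists $y\in S_Z$ with $\|rx\pm sy\|\le 1$ for all $x\in A$. *)

(* Defs.v *)
From HB Require Import structures.
From mathcomp Require Import all_boot all_order all_algebra.
From mathcomp Require Import all_classical all_reals all_analysis.
Import Order.TTheory GRing.Theory Num.Theory.
Import numFieldNormedType.Exports.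
Set Implicit Arguments. Unset Strict Implicit. Unset Printing Implicit Defensive.
Local Open Scope classical_set_scope.
Local Open Scope ring_scope.

(* strict cardinal comparison |A| < |B| (the cardinal kappa is represented by
   the full set of a type K) *)
Definition card_lt (T U : Type) (A : set T) (B : set U) : Prop :=
  (A #<= B)%card /\ ~ (B #<= A)%card.

Definition unit_sphere (R : realType) (Z : normedModType R) : set Z :=
  [set z | `|z| = 1].

Definition SQ_lt (R : realType) (Z : normedModType R) (r s : R) (K : Type) : Prop :=
  forall A : set Z, A `<=` @unit_sphere R Z -> card_lt A [set: K] ->
    exists2 y : Z, y \in @unit_sphere R Z &
      forall x, A x -> `|r *: x + s *: y| <= 1 /\ `|r *: x - s *: y| <= 1.

(* Main.v *)
Require Import Defs.
From HB Require Import structures.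
From mathcomp Require Import all_boot all_order all_algebra.
From mathcomp Require Import all_classical all_reals all_analysis.
From mathcomp Require Import ring lra.
Import Order.TTheory GRing.Theory Num.Theory.
Import numFieldNormedType.Exports.
Local Open Scope classical_set_scope.
Local Open Scope ring_scope.

Lemma key (R : realType) (X : normedModType R) (r s : R) (x y0 : X) :
  0 < r -> `|s| <= 1 -> x != 0 -> `|x| <= 1 -> `|y0| = 1 ->
  `|r *: (`|x|^-1 *: x) + s *: y0| <= 1 -> `|r *: x + s *: y0| <= 1.
Proof.
move=> r0 s1 x0 x1 y1 H.
set t := `|x|.
have t0 : 0 < t by rewrite normr_gt0.
have E : r *: x + s *: y0 = t *: (r *: (t^-1 *: x) + s *: y0) + ((1 - t) * s) *: y0.
  rewrite scalerDr !scalerA mulrAC mulfV ?gt_eqF // mul1r -addrA; congr (_ + _).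
  by rewrite -scalerDl; congr (_ *: _); ring.
rewrite E; apply: (le_trans (ler_normD _ _)).
rewrite !normrZ y1 mulr1 (ger0_norm (ltW t0)); rewrite (ger0_norm (x := 1 - t)); last by rewrite subr_ge0.
have h1 : t * `|r *: (t^-1 *: x) + s *: y0| <= t.
  by rewrite -[X in _ <= X]mulr1; apply: ler_wpM2l; [exact: ltW|].
have h2 : (1 - t) * `|s| <= 1 - t.
  by rewrite -[X in _ <= X]mulr1; apply: ler_wpM2l; rewrite ?subr_ge0.
apply: (le_trans (lerD h1 h2)); lra.
Qed.

Theorem proposition6p6 (R : realType) (X Y : completeNormedModType R)
  (r s : R) (K : Type) :
  (exists x : X, x != 0) -> (exists y : Y, y != 0) ->
  0 < r <= 1 -> 0 < s <= 1 ->
  SQ_lt X r s K -> SQ_lt (X * Y)%type r s K.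
Proof.
move=> _ _ /andP[r0 r1] hs SQ A AS [AK KA].
pose B := (fun z : X * Y => `|z.1|^-1 *: z.1) @` [set z | A z /\ z.1 != 0].
have BA : (B #<= A)%card.
  apply: card_le_trans (card_image_le _ _) _.
  by apply: subset_card_le => z [].
have BS : B `<=` @unit_sphere R X.
  move=> _ [z [_ z0] <-]; rewrite /unit_sphere /= normrZ normrV ?unitfE ?normr_eq0 //.
  by rewrite normr_id mulVf // normr_eq0.
have [y0 y0S Hy0] : exists2 y0 : X, y0 \in @unit_sphere R X &
    forall x, B x -> `|r *: x + s *: y0| <= 1 /\ `|r *: x - s *: y0| <= 1.
  apply: SQ => //; split; first exact: card_le_trans BA AK.
  by move=> KB; apply: KA; apply: card_le_trans KB BA.
move: y0S; rewrite inE /unit_sphere /= => y1.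
have [s0 s1] : 0 < s /\ s <= 1 by move: hs => /andP[].
exists (y0, 0); first by rewrite inE /unit_sphere /= prod_normE /= normr0 y1 max_l ?ler01.
move=> [x y] Axy.
have := AS _ Axy; rewrite /unit_sphere /= prod_normE /= => nxy.
have x1 : `|x| <= 1 by rewrite -nxy le_max lexx.
have yb : `|y| <= 1 by rewrite -nxy le_max lexx orbT.
have ry : `|r *: y| <= 1.
  by rewrite normrZ (gtr0_norm r0); apply: (le_trans (ler_wpM2l (ltW r0) yb)); rewrite mulr1.
have [->|x0] := eqVneq x 0.
  rewrite !prod_normE /= !scaler0 !add0r normrN normrZ y1 mulr1 (gtr0_norm s0).
  by rewrite subr0 addr0 !ge_max s1 ry.
have Bx : B (`|x|^-1 *: x) by exists (x, y).
have [H1 H2] := Hy0 _ Bx.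
rewrite !prod_normE /= scaler0 addr0 subr0 !ge_max ry.
have sn : `|s| <= 1 by rewrite gtr0_norm.
split; rewrite ?andbT; first exact: key.
rewrite -scaleNr; apply: key => //; first by rewrite normrN.
by rewrite scaleNr.
Qed.
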